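(* Let $p$ be a ProbNetKAT program, $S=\mathcal{S}[\![p]\!]$ and $U$ as defined in the context. Then for every $n\ge1$: (1) $(SU)^n = S^nU$; (2) $SU$ is an absorbing Markov chain whose absorbing states are exactly the states $(\emptyset,b)$ for $b\subseteq\mathsf{Pk}$.
   Context: $\mathsf{Pk}$ is a finite set of packets; $[\varphi]$ is the Iverson bracket. For a ProbNetKAT program $p$, $\mathcal{B}[\![p]\!]\in[0,1]^{2^{\mathsf{Pk}}\times 2^{\mathsf{Pk}}}$ is its stochastic matrix semantics ($\mathcal{B}[\![p]\!]_{ab}$ = probability of output set $b$ on input set $a$); in particular every program maps input $\emptyset$ to output $\emptyset$ with probability 1. The small-step matrix on states $(a,b)\in 2^{\mathsf{Pk}}\times 2^{\mathsf{Pk}}$ is $S_{(a,b),(a',b')}=[b'=b\cup a]\,\mathcal{B}[\![p]\!]_{a,a'}$. A state $(a,b)$ is saturated if whenever $(S^n)_{(a,b),(a',b')}>0$ for some $n\ge0$ we have $b'=b$. $U_{(a,b),(a',b')}=[b'=b][a'=\emptyset]$ if $(a,b)$ is saturated, and $[b'=b][a'=a]$ otherwise. A state $s$ of a Markov chain $T$ is absorbing if $T_{s,s'}=[s=s']$ for all $s'$; $T$ is an absorbing Markov chain if from every state some absorbing state is reachable ($T^n_{s,s'}>0$ for some $n\ge0$ and absorbing $s'$). *)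

(* Defs.v *)
From HB Require Import structures.
From mathcomp Require Import all_boot all_order all_algebra.
From mathcomp Require Import boolp reals.
Set Implicit Arguments. Unset Strict Implicit. Unset Printing Implicit Defensive.
Import Order.TTheory GRing.Theory Num.Theory.
Local Open Scope ring_scope.

Definition mat (R : realType) (T : finType) := T -> T -> R.

Definition mxid (R : realType) (T : finType) : mat R T :=
  fun i j => (i == j)%:R.

Definition mxmulF (R : realType) (T : finType) (M N : mat R T) : mat R T :=
  fun i j => \sum_(k : T) M i k * N k j.

Fixpoint mxpowF (R : realType) (T : finType) (M : mat R T) (n : nat) : mat R T :=
  match n with
  | O => @mxid R T
  | S n' => mxmulF M (mxpowF M n')
  end.

Definition stochastic (R : realType) (T : finType) (M : mat R T) : Prop :=
  (forall i j, 0 <= M i j) /\ (forall i, \sum_(j : T) M i j = 1).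

(* Hypotheses on the big-step semantics B[[p]] of a ProbNetKAT program:
   a stochastic matrix on 2^Pk mapping input set0 to output set0 w.p. 1. *)
Definition bigstep_like (R : realType) (Pk : finType)
  (B : mat R {set Pk}) : Prop :=
  stochastic B /\ (forall b, B set0 b = (b == set0)%:R).

Definition state (Pk : finType) := ({set Pk} * {set Pk})%type.

Definition smallstep (R : realType) (Pk : finType) (B : mat R {set Pk})
  : mat R (state Pk) :=
  fun s s' => (s'.2 == s.2 :|: s.1)%:R * B s.1 s'.1.

Definition saturated (R : realType) (Pk : finType) (B : mat R {set Pk})
  (s : state Pk) : Prop :=
  forall (n : nat) (s' : state Pk),
    0 < mxpowF (smallstep B) n s s' -> s'.2 = s.2.

Definition Umx (R : realType) (Pk : finType) (B : mat R {set Pk})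
  : mat R (state Pk) :=
  fun s s' =>
    if `[< saturated B s >]
    then ((s'.2 == s.2) && (s'.1 == set0))%:R
    else ((s'.2 == s.2) && (s'.1 == s.1))%:R.

Definition absorbing (R : realType) (T : finType) (M : mat R T) (s : T) : Prop :=
  forall s', M s s' = (s == s')%:R.

Definition absorbing_chain (R : realType) (T : finType) (M : mat R T) : Prop :=
  stochastic M /\
  (forall s, exists (n : nat) (s' : T), absorbing M s' /\ 0 < mxpowF M n s s').

(* Main.v *)
Require Import Defs.
From HB Require Import structures.
From mathcomp Require Import all_boot all_order all_algebra.
From mathcomp Require Import boolp reals.
From mathcomp Require Import zify.
Import Order.TTheory GRing.Theory Num.Theory.
Local Open Scope ring_scope.
Set Implicit Arguments. Unset Strict Implicit.

Lemma sum_dl (R : realType) (T : finType) (s : T) (F : T -> R) :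
  \sum_k (k == s)%:R * F k = F s.
Proof.
rewrite (bigD1 s) //= eqxx mul1r big1 ?addr0 // => j /negbTE ->.
by rewrite mul0r.
Qed.

Lemma sum_dr (R : realType) (T : finType) (s : T) (F : T -> R) :
  \sum_k F k * (k == s)%:R = F s.
Proof.
rewrite (bigD1 s) //= eqxx mulr1 big1 ?addr0 // => j /negbTE ->.
by rewrite mulr0.
Qed.

Lemma mulA (R : realType) (T : finType) (M N P : mat R T) :
  mxmulF (mxmulF M N) P = mxmulF M (mxmulF N P).
Proof.
apply/funext=> i; apply/funext=> j; rewrite /mxmulF.
under eq_bigr do rewrite big_distrl /=.
rewrite exchange_big /=; apply: eq_bigr => l _.
rewrite big_distrr /=; apply: eq_bigr => k _; by rewrite mulrA.
Qed.

Lemma mul1M (R : realType) (T : finType) (M : mat R T) :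
  mxmulF (@mxid R T) M = M.
Proof.
apply/funext=> i; apply/funext=> j; rewrite /mxmulF /mxid.
under eq_bigr do rewrite eq_sym.
by rewrite sum_dl.
Qed.

Lemma mulM1 (R : realType) (T : finType) (M : mat R T) :
  mxmulF M (@mxid R T) = M.
Proof.
apply/funext=> i; apply/funext=> j; rewrite /mxmulF /mxid.
by rewrite sum_dr.
Qed.

Lemma powD (R : realType) (T : finType) (M : mat R T) m n :
  mxpowF M (m + n) = mxmulF (mxpowF M m) (mxpowF M n).
Proof.
elim: m => [|m IH] /=; first by rewrite mul1M.
by rewrite IH mulA.
Qed.

Lemma pos_mul_ex (R : realType) (T : finType) (M N : mat R T) i j :
  (forall i j, 0 <= M i j) -> (forall i j, 0 <= N i j) ->
  0 < mxmulF M N i j -> exists k, 0 < M i k /\ 0 < N k j.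
Proof.
move=> hM hN hp; case: (pselect (exists k, 0 < M i k /\ 0 < N k j)) => // H.
exfalso; move: hp; rewrite /mxmulF big1 ?ltxx // => k _.
have [h1|h1] := eqVneq (M i k) 0; first by rewrite h1 mul0r.
have [h2|h2] := eqVneq (N k j) 0; first by rewrite h2 mulr0.
by exfalso; apply: H; exists k; rewrite !lt0r h1 h2 hM hN.
Qed.

Lemma mul_pos (R : realType) (T : finType) (M N : mat R T) i k j :
  (forall i j, 0 <= M i j) -> (forall i j, 0 <= N i j) ->
  0 < M i k -> 0 < N k j -> 0 < mxmulF M N i j.
Proof.
move=> hM hN h1 h2; rewrite /mxmulF (bigD1 k) //=.
apply: (lt_le_trans (mulr_gt0 h1 h2)); rewrite lerDl.
by apply: sumr_ge0 => l _; apply: mulr_ge0.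
Qed.

Lemma stoch_mul (R : realType) (T : finType) (M N : mat R T) :
  stochastic M -> stochastic N -> stochastic (mxmulF M N).
Proof.
move=> [hM sM] [hN sN]; split.
  by move=> i j; apply: sumr_ge0 => l _; apply: mulr_ge0.
move=> i; rewrite /mxmulF exchange_big /= -(sM i); apply: eq_bigr => k _.
by rewrite -big_distrr /= sN mulr1.
Qed.

Lemma stoch_pow (R : realType) (T : finType) (M : mat R T) n :
  stochastic M -> stochastic (mxpowF M n).
Proof.
move=> hM; elim: n => [|n IH] /=; last exact: stoch_mul.
split; first by move=> i j; rewrite /mxid ler0n.
move=> i; rewrite /mxid; under eq_bigr do rewrite eq_sym.
rewrite (eq_bigr (fun k => (k == i)%:R * (1:R))) ?sum_dl // => k _.
by rewrite mulr1.
Qed.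

Lemma mul_delta (R : realType) (T : finType) (M N : mat R T) s t j :
  (forall k, M s k = (k == t)%:R) -> mxmulF M N s j = N t j.
Proof. by move=> h; rewrite /mxmulF; under eq_bigr do rewrite h; rewrite sum_dl. Qed.

Lemma pow_fix (R : realType) (T : finType) (M : mat R T) s :
  (forall k, M s k = (k == s)%:R) ->
  forall n k, mxpowF M n s k = (k == s)%:R.
Proof.
move=> h; elim=> [|n IH] k /=; first by rewrite /mxid eq_sym.
by rewrite (mul_delta _ _ h) IH.
Qed.

Definition tgt (R : realType) (Pk : finType) (B : mat R {set Pk}) (s : state Pk)
  : state Pk := if `[< saturated B s >] then (set0, s.2) else s.

Lemma UE (R : realType) (Pk : finType) (B : mat R {set Pk}) s s' :
  Umx B s s' = (s' == tgt B s)%:R.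
Proof.
rewrite /Umx /tgt; case: asboolP => _; case: s' => a' b'; case: s => a b /=;
  by rewrite xpair_eqE andbC.
Qed.

Section S.
Variables (R : realType) (Pk : finType) (B : mat R {set Pk}).
Hypothesis hB : bigstep_like B.

Lemma S_stoch : stochastic (smallstep B).
Proof.
case: hB => [[h0 h1] _]; split.
  by move=> s s'; apply: mulr_ge0; rewrite ?ler0n ?h0.
move=> [a b]; rewrite -(h1 a) /smallstep /=.
rewrite -(pair_big xpredT xpredT (fun a' b' => (b' == b :|: a)%:R * B a a')) /=.
apply: eq_bigr => a' _.
by rewrite (eq_bigr (fun b' => (b' == b :|: a)%:R * B a a')) // -big_distrl /=
  (eq_bigr (fun k => (k == b :|: a)%:R * (1:R))) ?sum_dl ?mul1r // => k _; rewrite mulr1.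
Qed.

Lemma Sn_ge0 n i j : 0 <= mxpowF (smallstep B) n i j.
Proof. by case: (stoch_pow n S_stoch) => h _; apply: h. Qed.

Lemma S_ge0 i j : 0 <= smallstep B i j.
Proof. by case: S_stoch => h _; apply: h. Qed.

Lemma Spos s j : 0 < smallstep B s j -> j.2 = s.2 :|: s.1.
Proof. by rewrite /smallstep; case: eqP => // _; rewrite mul0r ltxx. Qed.

Lemma S_empty b k : smallstep B (set0, b) k = (k == (set0, b))%:R.
Proof.
case: hB => _ h2; rewrite /smallstep /= setU0 h2; case: k => a' b' /=.
by rewrite xpair_eqE -natrM mulnb andbC.
Qed.

Lemma mono n s k : 0 < mxpowF (smallstep B) n s k -> s.2 \subset k.2.
Proof.
elim: n s => [|n IH] s /=.
  by rewrite /mxid; case: eqP => [->|]; rewrite ?subxx ?ltxx.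
case/pos_mul_ex => [||j [h1 h2]]; [exact: S_ge0 | exact: Sn_ge0 |].
apply: subset_trans (IH _ h2); rewrite (Spos h1); exact: subsetUl.
Qed.

Lemma powtrans m n s k k' : 0 < mxpowF (smallstep B) m s k ->
  0 < mxpowF (smallstep B) n k k' -> 0 < mxpowF (smallstep B) (m + n) s k'.
Proof. by move=> h1 h2; rewrite powD; apply: (mul_pos _ _ h1 h2) => *; apply: Sn_ge0. Qed.

Lemma sat_reach n s k : saturated B s -> 0 < mxpowF (smallstep B) n s k ->
  saturated B k /\ k.2 = s.2.
Proof.
move=> hs hp; have e := hs _ _ hp; split=> // m k' hk.
by rewrite e; apply: (hs (n + m)); apply: powtrans hp hk.
Qed.

Lemma Sn_empty b n k : mxpowF (smallstep B) n (set0, b) k = (k == (set0, b))%:R.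
Proof. by apply: pow_fix => k'; apply: S_empty. Qed.

Lemma empty_sat b : saturated B (set0, b).
Proof.
move=> n s'; rewrite Sn_empty; case: eqP => [->//|]; by rewrite ltxx.
Qed.

Lemma keyF n : mxmulF (Umx B) (mxmulF (mxpowF (smallstep B) n) (Umx B))
   = mxmulF (mxpowF (smallstep B) n) (Umx B).
Proof.
apply/funext=> i; apply/funext=> j.
rewrite (mul_delta _ _ (t := tgt B i)); last by move=> k; rewrite UE.
rewrite /tgt; case: asboolP => // sat.
rewrite (mul_delta _ _ (t := (set0, i.2))); last by move=> k; rewrite Sn_empty.
rewrite UE /tgt asboolT; last exact: empty_sat.
rewrite /mxmulF (eq_bigr (fun k => mxpowF (smallstep B) n i k * (j == (set0, i.2))%:R)).
  by rewrite -big_distrl /=; case: (stoch_pow n S_stoch) => _ ->; rewrite mul1r.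
move=> k _; have [->|nz] := eqVneq (mxpowF (smallstep B) n i k) 0; first by rewrite !mul0r.
have hp : 0 < mxpowF (smallstep B) n i k by rewrite lt0r nz Sn_ge0.
have [sk ek] := sat_reach sat hp.
by rewrite UE /tgt asboolT // ek.
Qed.

End S.

Lemma reach_sat (R : realType) (Pk : finType) (B : mat R {set Pk})
  (hB : bigstep_like B) s :
  exists n k, 0 < mxpowF (smallstep B) n.+1 s k /\ saturated B k.
Proof.
suff: forall N (s : state Pk), (#|Pk| - #|s.2| < N)%N ->
  exists n k, 0 < mxpowF (smallstep B) n.+1 s k /\ saturated B k.
  by apply; apply: ltnSn.
elim=> [//|N IH] {}s hN.
have [j hj] : exists j, 0 < smallstep B s j.
  case: (pselect (exists j, 0 < smallstep B s j)) => // H; exfalso.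
  have := (S_stoch hB).2 s; rewrite big1 => [|j _].
    by move/eqP; rewrite eq_sym oner_eq0.
  apply/eqP; rewrite eq_le S_ge0 // andbT leNgt; apply/negP => hp; apply: H.
  by exists j.
have h1 : 0 < mxpowF (smallstep B) 1 s j by rewrite /= mulM1.
case: (pselect (saturated B j)) => [sj|nsj]; first by exists 0%N, j.
have [m [j' [hm ne]]] : exists m j', 0 < mxpowF (smallstep B) m j j' /\ j'.2 != j.2.
  case: (pselect (exists m j', 0 < mxpowF (smallstep B) m j j' /\ j'.2 != j.2)) => // H.
  exfalso; apply: nsj => m j' hp; case: (eqVneq j'.2 j.2) => // ne; exfalso; apply: H.
  by exists m, j'.
have sub1 : s.2 \subset j.2 by rewrite (Spos hj) subsetUl.
have sub2 : j.2 \proper j'.2 by rewrite properEneq eq_sym ne (mono hB hm).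
have c1 := subset_leq_card sub1; have c2 := proper_card sub2.
have c3 : (#|j'.2| <= #|Pk|)%N by apply: max_card.
have arith : forall P a b c N, (a <= b)%N -> (b < c)%N -> (c <= P)%N ->
  (P - a < N.+1)%N -> (P - c < N)%N by move=> *; lia.
have [n [k [hn sk]]] := IH j' (arith _ _ _ _ _ c1 c2 c3 hN).
exists (m + n.+1)%N, k; split => //.
by have := powtrans hB (powtrans hB h1 hm) hn; rewrite add1n addSn.
Qed.

Unset Implicit Arguments.

Theorem proposition4p6 (R : realType) (Pk : finType) (B : mat R {set Pk})
  (hB : bigstep_like B) :
  (forall n : nat, (0 < n)%N ->
     mxpowF (mxmulF (smallstep B) (Umx B)) n
     = mxmulF (mxpowF (smallstep B) n) (Umx B))
  /\ absorbing_chain (mxmulF (smallstep B) (Umx B))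
  /\ (forall s : state Pk,
        absorbing (mxmulF (smallstep B) (Umx B)) s <-> s.1 = set0).
Proof.
have Ustoch : stochastic (Umx B).
  split; first by move=> i j; rewrite UE ler0n.
  move=> i; under eq_bigr do rewrite UE.
  rewrite (eq_bigr (fun k => (k == tgt B i)%:R * (1:R))) ?sum_dl // => k _.
  by rewrite mulr1.
have part1 : forall n : nat, (0 < n)%N ->
     mxpowF (mxmulF (smallstep B) (Umx B)) n
     = mxmulF (mxpowF (smallstep B) n) (Umx B).
  case=> // n _; elim: n => [|n IH]; first by rewrite /= !mulM1.
  have powS : forall (M : mat R (state Pk)) m, mxpowF M m.+1 = mxmulF M (mxpowF M m) by [].
  by rewrite powS IH mulA keyF // -mulA -powS.
have part3 : forall s : state Pk,
        absorbing (mxmulF (smallstep B) (Umx B)) s <-> s.1 = set0.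
  move=> [a b] /=; split; last first.
    move=> -> s'; rewrite (mul_delta _ _ (t := (set0, b))); last by move=> k; rewrite S_empty.
    rewrite UE /tgt asboolT /=; [by rewrite eq_sym | exact: (@empty_sat _ _ _ hB b)].
  move=> hab; case: (eqVneq a set0) => // na; exfalso.
  have := hab (a, b); rewrite eqxx /mxmulF (bigD1 (a, b)) //= big1 ?addr0; last first.
    move=> k nk; rewrite UE /tgt; case: asboolP => _.
      by rewrite xpair_eqE (negbTE na) mulr0.
    by rewrite eq_sym (negbTE nk) mulr0.
  rewrite UE /tgt; case: asboolP => nsat.
    by rewrite xpair_eqE (negbTE na) mulr0 => /eqP; rewrite eq_sym oner_eq0.
  rewrite eqxx mulr1 => hSs.
  have hrow : forall k, smallstep B (a, b) k = (k == (a, b))%:R.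
    move=> k; have [->|nk] := eqVneq k (a, b); first by rewrite hSs.
    have := (S_stoch hB).2 (a, b); rewrite (bigD1 (a, b)) //= hSs.
    move=> /(congr1 (fun x => x - 1)); rewrite addrC addrK subrr => h0.
    have := psumr_eq0P (fun i _ => S_ge0 hB (a, b) i) h0 nk.
    by [].
  apply: nsat => n s'; rewrite (pow_fix hrow); case: eqP => [->//|]; by rewrite ltxx.
split => //; split => //; split; first exact: stoch_mul (S_stoch hB) Ustoch.
move=> s; have [n [k [hn sk]]] := reach_sat hB s.
exists n.+1, (set0, k.2); split; first by apply/part3.
rewrite part1 //; apply: (mul_pos _ _ hn).
- by move=> *; apply: Sn_ge0.
- by case: Ustoch.
- by rewrite UE /tgt asboolT // eqxx ltr01.
Qed.
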